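(* Let $n \geq 1$ and $i \in \mathbb{Z}_{\geq 2}$. Then $\dim_{\mathbb{F}_2} \mathrm{Gov}(V_{[n]}, i) = (i-1)\binom{n}{i}$.
   Context: $V_{[n]} = \mathbb{F}_2^n$ with standard basis $e_1,\dots,e_n$ and dual basis $\chi_1,\dots,\chi_n$ ($\chi_s(e_{s'}) = \delta_{s,s'}$). $\mathrm{Multi}(V_{[n]}, i)$ is the space of multilinear maps $V_{[n]}^i \to \mathbb{F}_2$, and $\chi_{h_1}\otimes\cdots\otimes\chi_{h_i}$ denotes $(\sigma_1,\dots,\sigma_i)\mapsto \prod_s \chi_{h_s}(\sigma_s)$. For $A \subseteq [n]$ with $\#A = i \geq 2$ and $x \in A$, the governing tensor is $\phi_{(A,x)} = \sum_{\tau} \chi_{\tau(1)}\otimes\cdots\otimes\chi_{\tau(i)}$, the sum over bijections $\tau: \{1,\dots,i\} \to A$ with $\tau(i-1) = x$ or $\tau(i) = x$. $\mathrm{Gov}(V_{[n]}, i)$ is the span of all $\phi_{(A,x)}$ with $A \subseteq [n]$, $\#A = i$, $x \in A$. *)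

(* Defs.v *)
From HB Require Import structures.
From mathcomp Require Import all_boot all_order all_algebra.
Set Implicit Arguments. Unset Strict Implicit. Unset Printing Implicit Defensive.
Import GRing.Theory.
Definition F2 : finFieldType := 'F_2.
Local Open Scope ring_scope.

(* V_[n] = F_2^n, as row vectors; coordinates 'I_n = {0,..,n-1} (0-indexed). *)
Notation V n := 'rV[F2]_n.

(* The ambient space of all maps V_[n]^i -> F_2 (i-tuples of vectors as finite
   functions 'I_i -> V n).  Multi(V_[n], i) is a subspace of it; Gov is spanned
   inside it. *)
Definition Maps (n i : nat) := {ffun {ffun 'I_i -> V n} -> F2^o}.

Definition chi (n : nat) (s : 'I_n) (v : V n) : F2 := v 0 s.

Definition multilinear (n i : nat) (f : Maps n i) : Prop :=
  forall (s : 'I_i) (sigma : {ffun 'I_i -> V n}) (a : F2) (u w : V n),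
    f [ffun t => if t == s then a *: u + w else sigma t]
    = a * f [ffun t => if t == s then u else sigma t]
      + f [ffun t => if t == s then w else sigma t].

Definition tensor (n i : nat) (h : {ffun 'I_i -> 'I_n}) : Maps n i :=
  [ffun sigma : {ffun 'I_i -> V n} => \prod_(s < i) chi (h s) (sigma s)].

(* Bijections tau : {1..i} -> A, i.e. injective maps 'I_i -> 'I_n with image A;
   with 0-indexing, positions i-1 and i become (i-2) and (i-1). *)
Definition governing_index (n i : nat) (A : {set 'I_n}) (x : 'I_n)
    (tau : {ffun 'I_i -> 'I_n}) : bool :=
  [&& injectiveb tau, [set tau j | j : 'I_i] == A &
      [exists j : 'I_i,
         ((nat_of_ord j == (i - 2)%N) || (nat_of_ord j == (i - 1)%N)) && (tau j == x)]].

Definition phi (n i : nat) (A : {set 'I_n}) (x : 'I_n) : Maps n i :=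
  \sum_(tau : {ffun 'I_i -> 'I_n} | @governing_index n i A x tau) tensor tau.

Definition Gov (n i : nat) : {vspace Maps n i} :=
  <<[seq @phi n i p.1 p.2 |
      p <- enum [pred p : {set 'I_n} * 'I_n | (#|p.1| == i) && (p.2 \in p.1)]]>>%VS.

(* Main.v *)
Require Import Defs.
From HB Require Import structures.
From mathcomp Require Import all_boot all_order all_algebra.
From mathcomp Require Import zify.

Section Helpers.
Set Implicit Arguments. Unset Strict Implicit. Unset Printing Implicit Defensive.
Import GRing.Theory.
Local Open Scope ring_scope.

Lemma two0 : (2%:R : F2) = 0. Proof. by apply/eqP. Qed.

Definition sig n i (g : {ffun 'I_i -> 'I_n}) : {ffun 'I_i -> V n} :=
  [ffun s => delta_mx 0 (g s)].

Lemma tensor_sig n i (h g : {ffun 'I_i -> 'I_n}) : tensor h (sig g) = (h == g)%:R.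
Proof.
rewrite ffunE; case: eqVneq => [->|hg].
  by rewrite big1 // => s _; rewrite /chi ffunE mxE !eqxx.
have [s Hs] : exists s, h s != g s.
  apply/existsP; case: (boolP [exists s, h s != g s]) => // /existsPn H; case/eqP: hg.
  by apply/ffunP => s; apply/eqP; move: (H s); rewrite negbK.
by rewrite (bigD1 s) //= /chi ffunE mxE eqxx (negbTE Hs) mul0r.
Qed.

Lemma phi_sig n i (A : {set 'I_n}) x g :
  phi i A x (sig g) = (governing_index A x g)%:R.
Proof.
rewrite /phi sum_ffunE; under eq_bigr do rewrite tensor_sig.
case: (boolP (governing_index A x g)) => Hg.
  by rewrite (bigD1 g) //= eqxx big1 ?addr0 // => tau /andP[_ /negPf->].
by rewrite big1 // => tau Ht; case: eqVneq Ht Hg => // -> ->.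
Qed.

Lemma phi_notin n i (A : {set 'I_n}) x : x \notin A -> phi i A x = 0.
Proof.
move=> xA; rewrite /phi big_pred0 // => tau.
apply/negbTE; apply/negP => /and3P[_ /eqP HA /existsP[j /andP[_ /eqP Hj]]].
by move: xA; rewrite -HA -Hj imset_f.
Qed.
Lemma gov_count n i (A : {set 'I_n}) (tau : {ffun 'I_i -> 'I_n}) :
  (2 <= i)%N ->
  #|[pred x | governing_index A x tau]| = 0%N \/
  #|[pred x | governing_index A x tau]| = 2%N.
Proof.
move=> hi.
case: (boolP (injectiveb tau && ([set tau j | j : 'I_i] == A))); last first.
  move=> H; left; apply: eq_card0 => x; rewrite inE /governing_index.
  by case: (injectiveb _) H => //=; case: (_ == A).
case/andP=> Hib HA; have Hinj := injectiveP _ Hib; right.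
have h2 : (i - 2 < i)%N by lia.
have h1 : (i - 1 < i)%N by lia.
pose j2 := Ordinal h2; pose j1 := Ordinal h1.
have -> : #|[pred x | governing_index A x tau]| = #|tau @: [set j2; j1]|.
  apply: eq_card => x; rewrite inE /governing_index.
  rewrite Hib HA /=; apply/existsP/imsetP => [[j /andP[Hj /eqP <-]]|[j Hj ->]].
    exists j => //; rewrite !inE; case/orP: Hj => /eqP Hj.
      by apply/orP; left; apply/eqP/val_inj.
    by apply/orP; right; apply/eqP/val_inj.
  exists j; rewrite eqxx andbT; move: Hj; rewrite !inE.
  by case/orP => /eqP ->; rewrite eqxx ?orbT.
rewrite card_imset // cards2; suff -> : j2 != j1 by [].
apply/eqP => /(congr1 val) /=; lia.
Qed.

Lemma sum_phi0 n i (A : {set 'I_n}) : (2 <= i)%N -> \sum_(x : 'I_n) phi i A x = 0.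
Proof.
move=> hi; apply/ffunP => sigma; rewrite sum_ffunE ffunE.
under eq_bigr do rewrite /phi sum_ffunE.
rewrite (exchange_big_dep xpredT) //=; apply: big1 => tau _.
rewrite (eq_bigl (mem [pred x | governing_index A x tau])) //.
rewrite sumr_const; case: (gov_count A tau hi) => ->; first by rewrite mulr0n.
by rewrite -mulr_natr two0 mulr0.
Qed.

Lemma witness n i (A : {set 'I_n}) a b : (2 <= i)%N -> #|A| = i ->
  a \in A -> b \in A -> a != b ->
  exists g : {ffun 'I_i -> 'I_n}, forall (C : {set 'I_n}) y,
    governing_index C y g = (C == A) && ((y == a) || (y == b)).
Proof.
move=> hi hA aA bA ab.
pose r := enum (A :\ a :\ b); pose s := r ++ [:: a; b].
have hr : size r = (i - 2)%N.
  rewrite /r -cardE; move: hA; rewrite (cardsD1 a A) aA (cardsD1 b (A :\ a)).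
  rewrite !inE bA eq_sym ab /=; lia.
have hs : size s = i by rewrite size_cat hr /=; lia.
have us : uniq s.
  rewrite cat_uniq enum_uniq /= inE ab andbT /= orbF andbT.
  by rewrite /r !mem_enum !inE !eqxx /= andbF.
have ms : forall y, (y \in s) = (y \in A).
  move=> y; rewrite mem_cat /r mem_enum !inE.
  case: (eqVneq y a) => [->|ya]; first by rewrite aA /= orbT.
  case: (eqVneq y b) => [->|yb]; first by rewrite bA !orbT.
  by rewrite /= !orbF.
pose g := [ffun j : 'I_i => nth a s j].
have ginj : injective g.
  move=> j k; rewrite !ffunE => /eqP; rewrite nth_uniq ?hs // => /eqP; exact: val_inj.
have gA : [set g j | j : 'I_i] = A.
  apply/setP => y; rewrite -ms; apply/imsetP/idP => [[j _ ->]|].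
    by rewrite ffunE mem_nth // hs.
  move=> /(nthP a) [k]; rewrite hs => hk <-; exists (Ordinal hk) => //.
  by rewrite ffunE.
have g2 : forall j : 'I_i, val j = (i - 2)%N -> g j = a.
  by move=> j hj; rewrite ffunE hj /s nth_cat hr ltnn subnn.
have g1 : forall j : 'I_i, val j = (i - 1)%N -> g j = b.
  move=> j hj; rewrite ffunE hj /s nth_cat hr ltnNge.
  have -> : (i - 2 <= i - 1)%N by lia.
  by have -> : (i - 1 - (i - 2) = 1)%N by lia.
exists g => C y; rewrite /governing_index gA (introT (injectiveP _) ginj) /= eq_sym.
case: (C == A) => //=.
have h2 : (i - 2 < i)%N by lia.
have h1 : (i - 1 < i)%N by lia.
apply/existsP/idP => [[j /andP[/orP[] /eqP hj /eqP <-]]|/orP[] /eqP ->].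
- by rewrite g2 // eqxx.
- by rewrite g1 // eqxx orbT.
- by exists (Ordinal h2); rewrite eqxx /= g2.
- by exists (Ordinal h1); rewrite eqxx orbT /= g1.
Qed.
Definition PB n i := [pred p : {set 'I_n} * 'I_n |
  [&& #|p.1| == i, p.2 \in p.1 & Some p.2 != [pick x in p.1]]].

Lemma card_PB n i : (2 <= i)%N -> #|PB n i| = ((i - 1) * 'C(n, i))%N.
Proof.
move=> hi.
have <- : (\sum_(A : {set 'I_n}) \sum_(x : 'I_n) nat_of_bool (PB n i (A, x)) = #|PB n i|)%N.
  rewrite pair_big /= -sum1_card [RHS]big_mkcond /=; apply: eq_bigr => -[A x] _ /=.
  by rewrite inE; case: (_ && _).
rewrite (eq_bigr (fun A : {set 'I_n} => if #|A| == i then (i - 1)%N else 0%N)); last first.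
  move=> A _; case: (eqVneq #|A| i) => hA; last first.
    by apply: big1 => x _; rewrite /= (negbTE hA).
  have [x0 x0A Hp] : exists2 x0, x0 \in A & [pick x in A] = Some x0.
    case: pickP => [x0 ? | H]; first by exists x0.
    by move: hA; rewrite (eq_card0 H); lia.
  rewrite (eq_bigr (fun x => if x \in A :\ x0 then 1 else 0)%N); last first.
    move=> x _; rewrite /= hA eqxx !inE /=.
    by rewrite Hp (inj_eq (@Some_inj _)) andbC; case: (_ && _).
  rewrite -big_mkcond sum1_card; move: hA; rewrite (cardsD1 x0 A) x0A; lia.
rewrite -big_mkcond /= (eq_bigl (mem [set A : {set 'I_n} | #|A| == i])); last first.
  by move=> A; rewrite !inE.
by rewrite sum_nat_const card_draws card_ord mulnC.
Qed.

Lemma pick_some n (A : {set 'I_n}) : (0 < #|A|)%N ->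
  exists2 x0, x0 \in A & [pick x in A] = Some x0.
Proof.
move=> hA; case: pickP => [x0 ? | H]; first by exists x0.
by move: hA; rewrite (eq_card0 H).
Qed.

Lemma Gov_eq n i : (2 <= i)%N ->
  Gov n i = <<[seq phi i p.1 p.2 | p <- enum (PB n i)]>>%VS.
Proof.
move=> hi; apply/eqP; rewrite eqEsubv; apply/andP; split.
- rewrite /Gov; apply/span_subvP => f /mapP [[A x] hp ->] /=.
  rewrite mem_enum inE /= in hp; case/andP: hp => hA xA.
  case: (boolP (Some x != [pick y in A])) => hx.
    by apply: memv_span; apply/mapP; exists (A, x) => //; rewrite mem_enum inE /= hA xA hx.
  have := sum_phi0 (i:=i) A hi; rewrite (bigD1 x) //= => /eqP; rewrite addr_eq0 => /eqP ->.
  rewrite memvN; apply: memv_suml => y yx.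
  case: (boolP (y \in A)) => yA; last by rewrite phi_notin // mem0v.
  apply: memv_span; apply/mapP; exists (A, y) => //; rewrite mem_enum inE /= hA yA /=.
  by move: hx; rewrite negbK => /eqP <-; rewrite (inj_eq (@Some_inj _)).
- apply: sub_span => f /mapP [[A x] hp ->]; apply/mapP; exists (A, x) => //.
  by move: hp; rewrite !mem_enum !inE /= => /and3P[-> -> _].
Qed.

Lemma freeB n i (z : 'I_n) : (2 <= i)%N ->
  free [seq phi i p.1 p.2 | p <- enum (PB n i)].
Proof.
move=> hi; set e := enum (PB n i); set B := [seq _ | p <- e].
have p0 : {set 'I_n} * 'I_n := (set0, z).
suff: free (in_tuple B) by []. apply/freeP => k Hk j.
have hsz : size B = size e by rewrite size_map.
have hj : (j < size e)%N by rewrite -hsz.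
case E: (nth p0 e j) => [A x].
have : (A, x) \in PB n i by rewrite -E -mem_enum mem_nth.
rewrite inE /= => /and3P[/eqP hA xA hx].
have hA0 : (0 < #|A|)%N by rewrite hA; lia.
have [x0 x0A Hp] := pick_some hA0.
rewrite Hp (inj_eq (@Some_inj _)) in hx.
have x0x : x0 != x by rewrite eq_sym.
have [g Hg] := witness hi hA x0A xA x0x.
move/(congr1 (fun f : Maps n i => f (sig g))): Hk.
rewrite sum_ffunE ffunE.
under eq_bigr => l _ do rewrite ffunE.
have HB : forall l : 'I_(size B), (in_tuple B)`_l (sig g) = ((l : nat) == j)%:R.
  move=> l; have hl : (l < size e)%N by rewrite -hsz.
  rewrite /= (nth_map p0 _ _ hl) phi_sig Hg; congr (_%:R).
  have ql : nth p0 e l \in PB n i by rewrite -mem_enum mem_nth.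
  rewrite -(nth_uniq p0 hl hj (enum_uniq _)) E.
  case Eq: (nth p0 e l) ql => [C y]; rewrite inE /= xpair_eqE.
  case: (eqVneq C A) => [->|] //= /and3P[_ _].
  rewrite Hp (inj_eq (@Some_inj _)) => /negbTE ->; done.
under eq_bigr => l _ do rewrite HB.
rewrite (bigD1 j) //= eqxx -[k j *: _]/(k j * 1) mulr1 big1 ?addr0 // => l hl.
by move: hl; rewrite -val_eqE => /negbTE ->; rewrite -[k l *: _]/(k l * 0) mulr0.
Qed.

End Helpers.

Theorem proposition2p1 (n i : nat) (hn : (1 <= n)%N) (hi : (2 <= i)%N) :
  \dim (Gov n i) = ((i - 1) * 'C(n, i))%N.
Proof.
rewrite Gov_eq //; have /eqP -> := freeB (Ordinal hn) hi.
by rewrite size_map -cardE card_PB.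
Qed.
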